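(* Let $k\geq 2$ and $n\geq k$ be integers. Then in $\mathcal{H}$, $$ z_1\,\tilde{\sqcup}\, \sum_{\substack{s_i\geq 1,\ s_1\geq 2\\ s_1+\cdots+s_{k-1}=n-1}}z_{s_1, \dots, s_{k-1}} = \sum_{\substack{t_i\geq 1,\ t_1=1,\ t_2\geq 2\\ t_1+\cdots+t_{k}=n}}z_{t_1,\dots, t_{k}}+ k \sum_{\substack{ t_i\geq 1,\ t_1\geq 2,\ t_k=1 \\ t_1+\cdots+t_{k}=n}} z_{t_1,\dots, t_{k}} + (k-1) \sum_{\substack{ t_i\geq 1,\ t_1, t_k\geq 2 \\ t_1+\cdots+t_{k}=n}} z_{t_1,\dots, t_{k}} $$ and $$ z_1\,\tilde{\sqcup} \sum_{\substack{ s_i\geq 1\\ s_1+\cdots+s_{k-1}=n-1}} z_{s_1, \dots, s_{k-1}}= k \sum_{\substack{ t_i\geq 1,\ t_k=1\\ t_1+\cdots+t_{k}=n}}z_{t_1,\dots, t_{k}} + (k-1) \sum_{\substack{ t_i\geq 1,\ t_k\geq 2 \\ t_1+\cdots+t_{k}=n }} z_{t_1,\dots, t_{k}}. $$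
   Context: Let $\mathcal{H}$ be the free $\mathbb{Z}$-module on words in letters $z_s$ ($s\geq1$), with $z_{s_1,\dots,s_k}:=z_{s_1}\cdots z_{s_k}$ and $1$ the empty word. Let $\mathbb{Z}\langle x_0,x_1\rangle$ be the free $\mathbb{Z}$-module on words in two letters $x_0,x_1$, with the shuffle product $\sqcup$ defined bilinearly and recursively by $1\sqcup u=u\sqcup 1=u$ and $(au)\sqcup(bv)=a(u\sqcup (bv))+b((au)\sqcup v)$ for letters $a,b\in\{x_0,x_1\}$ and words $u,v$. Let $\rho$ be the $\mathbb{Z}$-linear bijection from $\mathbb{Z}\oplus \mathbb{Z}\langle x_0,x_1\rangle x_1$ (span of $1$ and words ending in $x_1$) onto $\mathcal{H}$ given by $\rho(1)=1$ and $\rho(x_0^{s_1-1}x_1\cdots x_0^{s_k-1}x_1)=z_{s_1,\dots,s_k}$. Define the product $\tilde{\sqcup}$ on $\mathcal{H}$ by $w_1\,\tilde{\sqcup}\,w_2=\rho\big(\rho^{-1}(w_1)\sqcup\rho^{-1}(w_2)\big)$. Empty sums are zero. *)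

(* Defs.v *)
From mathcomp Require Import all_boot all_order all_algebra.
Set Implicit Arguments. Unset Strict Implicit. Unset Printing Implicit Defensive.
Import GRing.Theory.
Local Open Scope ring_scope.

(* Words in the letters x0 (= false) and x1 (= true). *)
Definition xword := seq bool.
(* Words z_{s_1,...,s_k} in H are sequences of positive naturals [:: s_1; ...; s_k]. *)
Definition zword := seq nat.
Definition is_zword (w : zword) : bool := all (fun s => 0 < s)%N w.

(* Elements of the free Z-modules: formal Z-linear combinations (finite lists of
   (coefficient, basis word)); two are equal iff all coefficients agree. *)
Definition Hel := seq (int * zword).
Definition Xel := seq (int * xword).

Definition coefH (A : Hel) (t : zword) : int :=
  \sum_(p <- A | p.2 == t) p.1.

Definition eqH (A B : Hel) : Prop := forall t, is_zword t -> coefH A t = coefH B t.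

Definition addH (A B : Hel) : Hel := A ++ B.
Definition scaleH (c : int) (A : Hel) : Hel := [seq (c * p.1, p.2) | p <- A].

Definition zsum (S : seq zword) : Hel := [seq (1, s) | s <- S].

(* shuffle product of two x-words, as the multiset (list) of resulting words *)
Fixpoint shuffle (u : xword) : xword -> seq xword :=
  match u with
  | [::] => fun v => [:: v]
  | a :: u' =>
      fix shv (v : xword) : seq xword :=
        match v with
        | [::] => [:: u]
        | b :: v' => map (cons a) (shuffle u' v) ++ map (cons b) (shv v')
        end
  end.

(* rho^{-1} : z_{s1..sk} |-> x0^{s1-1} x1 ... x0^{sk-1} x1 *)
Definition rho_inv (s : zword) : xword :=
  flatten [seq rcons (nseq s_i.-1 false) true | s_i <- s].

(* rho on words ending in x1 (the empty word goes to the empty word);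
   trailing x0's (never occurring below) are dropped. *)
Fixpoint rho_aux (c : nat) (w : xword) : zword :=
  match w with
  | [::] => [::]
  | false :: w' => rho_aux c.+1 w'
  | true :: w' => c.+1 :: rho_aux 0 w'
  end.
Definition rho (w : xword) : zword := rho_aux 0 w.

Definition shX (A B : Xel) : Xel :=
  flatten [seq flatten [seq [seq (a.1 * b.1, w) | w <- shuffle a.2 b.2] | b <- B] | a <- A].

Definition rhoinvH (A : Hel) : Xel := [seq (p.1, rho_inv p.2) | p <- A].
Definition rhoX (A : Xel) : Hel := [seq (p.1, rho p.2) | p <- A].

Definition tsh (A B : Hel) : Hel := rhoX (shX (rhoinvH A) (rhoinvH B)).

Fixpoint comps (k n : nat) : seq zword :=
  match k with
  | 0 => if n == 0%N then [:: [::]] else [::]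
  | k'.+1 => flatten [seq [seq s :: c | c <- comps k' (n - s)] | s <- iota 1 n]
  end.

(* Main.v *)
Require Import Defs.
From mathcomp Require Import all_boot all_order all_algebra zify.
Local Open Scope nat_scope.

Definition pos (u : zword) := all (fun s => 0 < s) u.

Lemma mem_comps m N u : (u \in comps m N) = [&& size u == m, pos u & sumn u == N].
Proof.
elim: m N u => [|m IH] N u /=.
  case: u => [|x u] /=; case: N => //=.
apply/idP/idP.
  case/flattenP=> l /mapP [s hs ->] /mapP [c hc ->] /=.
  rewrite IH in hc; case/and3P: hc => /eqP -> hp /eqP hsum.
  rewrite mem_iota in hs; rewrite eqxx hp /=; apply/andP; split; [lia|].
  apply/eqP; lia.
case: u => [|x u] //= /and3P [/eqP hs /andP [hx hp] /eqP hsum].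
apply/flattenP; exists [seq x :: c | c <- comps m (N - x)].
  apply/mapP; exists x => //; rewrite mem_iota; lia.
apply/mapP; exists u => //; rewrite IH -eqSS hs eqxx hp /=; apply/eqP; lia.
Qed.

Lemma uniq_comps m N : uniq (comps m N).
Proof.
elim: m N => [|m IH] N /=; first by case: N.
elim: (iota 1 N) (iota_uniq 1 N) => [|s l IHl] //= /andP [hs hl].
rewrite cat_uniq IHl // map_inj_uniq ?IH //; last by move=> a b [].
rewrite andbT; apply/hasPn => u /flattenP [l' /mapP [s' hs' ->]] /mapP [c _ ->].
apply/mapP => -[c' _ [e _]]; move: hs; by rewrite -e hs'.
Qed.
Fixpoint ins (s : zword) : seq zword :=
 match s with
 | [::] => [:: [:: 1]]
 | x :: s' => [seq p.+1 :: (x.-1 - p).+1 :: s' | p <- iota 0 x.-1]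
               ++ (x :: 1 :: s') :: map (cons x) (ins s')
 end.

Lemma sh1 b v : shuffle [:: true] (b :: v) = (true :: b :: v) :: map (cons b) (shuffle [:: true] v).
Proof. by []. Qed.

Lemma rho_nseq c m w : rho_aux c (nseq m false ++ w) = rho_aux (c + m) w.
Proof. by elim: m c => [|m IH] c /=; rewrite ?addn0 // IH addnS. Qed.

Lemma rho_inv_cons x s : rho_inv (x :: s) = nseq x.-1 false ++ true :: rho_inv s.
Proof. by rewrite /rho_inv /= cat_rcons. Qed.

Lemma rho_rho_inv s : pos s -> rho (rho_inv s) = s.
Proof.
elim: s => [|x s IH] //= /andP [hx hs].
rewrite rho_inv_cons /rho rho_nseq /= add0n prednK //; congr (_ :: _); exact: IH.
Qed.

Lemma sh_nseq c m w :
  map (rho_aux c) (shuffle [:: true] (nseq m false ++ w)) =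
  [seq (c + p).+1 :: rho_aux (m - p) w | p <- iota 0 m] ++ map (rho_aux (c + m)) (shuffle [:: true] w).
Proof.
elim: m c => [|m IH] c; first by rewrite /= addn0.
rewrite (_ : nseq m.+1 false ++ w = false :: (nseq m false ++ w)) // sh1 map_cons -map_comp.
idtac.
rewrite (@eq_map _ _ (rho_aux c \o cons false) (rho_aux c.+1)) // IH addSnnS.
rewrite [iota 0 m.+1]/= map_cons addn0 subn0 -(addn0 1) iotaDl -map_comp.
congr (_ :: _ ++ _).
  by rewrite [rho_aux c _]/= rho_nseq add1n.
apply: eq_map => p /=.
by rewrite add1n subSS addSnnS.
Qed.

Lemma rho_aux_true c w : rho_aux c (true :: w) = c.+1 :: rho w.
Proof. by []. Qed.

Lemma sh_ins s : pos s -> map rho (shuffle [:: true] (rho_inv s)) = ins s.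
Proof.
elim: s => [|x s IH] //= /andP [hx hs].
rewrite rho_inv_cons {1}/rho sh_nseq add0n sh1 map_cons -map_comp.
rewrite rho_aux_true (_ : rho (true :: rho_inv s) = 1 :: rho (rho_inv s)) // rho_rho_inv // prednK //.
congr (_ ++ _ :: _).
- by apply: eq_map => p; have := @rho_rho_inv s hs; rewrite /rho /= => ->.
- rewrite -IH // -map_comp; apply: eq_map => y /=; by rewrite prednK.
Qed.
Fixpoint pre (t : zword) : seq zword :=
 match t with
 | [::] => [::]
 | [:: a] => if a == 1 then [:: [::]] else [::]
 | a :: ((b :: r) as t') => ((a + b).-1 :: r) :: map (cons a) (pre t')
 end.

Lemma count_cons_map (a x : nat) (y : zword) (L : seq zword) :
  count (pred1 (x :: y)) (map (cons a) L) = (a == x) * count (pred1 y) L.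
Proof.
elim: L => [|u L IH] /=; first by rewrite muln0.
by rewrite IH eqseq_cons; case: (a == x); rewrite /= ?mul1n ?mul0n.
Qed.

Lemma count_nil_map (a : nat) (L : seq zword) : count (pred1 [::]) (map (cons a) L) = 0.
Proof. by elim: L. Qed.

Lemma count_first (a b m : nat) (r s' : zword) : 0 < a ->
  count (pred1 (a :: b :: r)) [seq p.+1 :: (m - p).+1 :: s' | p <- iota 0 m]
  = [&& a <= m, a + b == m.+2 & s' == r].
Proof.
move=> ha; rewrite count_map.
rewrite (eq_in_count (a2 := fun p => (p == a.-1) && [&& a <= m, a + b == m.+2 & s' == r])); last first.
  move=> p; rewrite mem_iota => hp /=; rewrite !eqseq_cons.
  case: (s' == r); rewrite ?andbF ?andbT //.
  apply/idP/idP => H; lia.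
case C: [&& a <= m, a + b == m.+2 & s' == r].
  rewrite (eq_count (a2 := pred1 a.-1)); last by move=> p; rewrite /= andbT.
  rewrite count_uniq_mem ?iota_uniq // mem_iota; move/and3P: C => [h1 _ _]; lia.
by rewrite (eq_count (a2 := pred0)) ?count_pred0 // => p; rewrite /= andbF.
Qed.

Lemma count_cons (T : Type) (P : pred T) x l : count P (x :: l) = P x + count P l.
Proof. by []. Qed.

Lemma pre_cons2 a b r : pre (a :: b :: r) = ((a + b).-1 :: r) :: map (cons a) (pre (b :: r)).
Proof. by []. Qed.

Lemma count_ins_pre s t : pos t -> count (pred1 t) (ins s) = count (pred1 s) (pre t).
Proof.
elim: s t => [|x s IH] t.
  case: t => [|a [|b r]] ht //.
    by rewrite /= eqseq_cons andbT eq_sym; case: (a == 1).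
  by rewrite pre_cons2 !count_cons count_nil_map /= !eqseq_cons ?andbF.
case: t => [|a [|b r]].
- rewrite /= count_cat /= count_nil_map addn0; by elim: (iota 0 x.-1) => //= p l ->.
- move=> _; rewrite /ins -/ins count_cat count_cons count_cons_map (IH [::]) //.
  rewrite [pre [::]]/= muln0 addn0 [pred1 _ _]/= eqseq_cons andbF addn0.
  rewrite (_ : count_mem (x :: s) (pre [:: a]) = 0); last by rewrite /=; case: (a == 1).
  by elim: (iota 0 x.-1) => //= p l ->; rewrite eqseq_cons andbF.
move=> ht; rewrite pre_cons2 count_cons count_cons_map -IH; last by case/andP: ht.
rewrite /ins -/ins count_cat count_cons count_cons_map.
case/and3P: ht => ha hb _.
rewrite count_first // addnA (eq_sym a x); congr (_ + _).
rewrite /= !eqseq_cons (eq_sym r s); case: (s == r); rewrite ?andbF ?andbT //.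
have [h|h] := leqP a x.-1.
  rewrite (_ : (x == a) = false) /=; last by apply/negbTE/eqP; lia.
  rewrite addn0; congr nat_of_bool; apply/idP/idP => /eqP e; apply/eqP; lia.
rewrite /= add0n; congr nat_of_bool.
apply/idP/idP => [/andP [/eqP h1 /eqP h2] | /eqP e]; first by apply/eqP; lia.
by apply/andP; split; apply/eqP; lia.
Qed.
Lemma pre_prop t u : pos t -> u \in pre t ->
  [/\ size u = (size t).-1, sumn u = (sumn t).-1, pos u & 0 < size t].
Proof.
elim: t u => [|a t IH] u //.
case: t IH => [|b r] IH.
  move=> /= _; case: (a =P 1) => // -> ; rewrite inE => /eqP -> //.
move=> /= /and3P [ha hb hr]; rewrite inE => /orP [/eqP ->|].
  rewrite /= hr andbT; split => //; lia.
case/mapP => u' hu' ->.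
have [h1 h2 h3 _] := IH u' (ltac:(by rewrite /= hb hr)) hu'.
rewrite /= h1 h2 ha h3; split => //.
have : 0 < b + sumn r by lia.
rewrite [sumn (b :: r)]/=; lia.
Qed.

Lemma size_pre a r : size (pre (a :: r)) = size r + (last a r == 1).
Proof.
elim: r a => [|b r IH] a /=; first by case: (a == 1).
by rewrite size_map IH addSn.
Qed.

Lemma sum_count_mem (S L : seq zword) : uniq S ->
  sumn [seq count (pred1 s) L | s <- S] = count (mem S) L.
Proof.
elim: S => [|s S IH] /=; first by rewrite count_pred0.
case/andP => hs hS; rewrite IH //.
rewrite -(@count_predUI _ (pred1 s) (mem S)).
rewrite (eq_count (a1 := predI _ _) (a2 := pred0)) ?count_pred0 ?addn0.
  by apply: eq_count => u; rewrite /= inE.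
move=> u /=; apply/negbTE/andP => -[/eqP -> h]; by rewrite h in hs.
Qed.

Lemma arith a b l m : 0 < a -> 0 < b -> 0 < l ->
  (1 < (a + b).-1) + (1 < a) * (m + (l == 1)) =
  (a == 1) && (1 < b) + (m.+2 * ((1 < a) && (l == 1)) + m.+1 * ((1 < a) && (1 < l))).
Proof.
move=> ha hb hl.
case: (ltnP 1 a) => h2a /=.
  have -> : 1 < (a + b).-1 by lia.
  rewrite (_ : a == 1 = false); last by apply/negbTE/eqP; lia.
  case: (l =P 1) => [->|hl1] /=; first lia.
  rewrite (_ : 1 < l); last by lia.
  lia.
have -> : a = 1 by lia.
rewrite /= !muln0 !addn0.
by [].
Qed.
Lemma arith2 l m : 0 < l ->
  m + (l == 1) = m.+1 * (l == 1) + m * (1 < l).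
Proof.
move=> hl; case: (l =P 1) => [->|hl1] /=; first lia.
rewrite (_ : 1 < l); last by lia.
lia.
Qed.

Lemma count_const (T : Type) (c : bool) (L : seq T) : count (fun _ => c) L = c * size L.
Proof. by case: c; rewrite ?count_predT ?count_pred0 ?mul1n. Qed.

Local Open Scope ring_scope.
Import GRing.Theory.

Lemma coefH_zsum (L : seq zword) t : coefH (zsum L) t = (count (pred1 t) L)%:Z.
Proof.
elim: L => [|s L IH]; first by rewrite /coefH big_nil.
rewrite /coefH /zsum map_cons big_cons -/(zsum L) -/(coefH _ _) IH /=.
by case: (s == t); rewrite ?add0r // PoszD.
Qed.

Lemma coefH_add A B t : coefH (addH A B) t = coefH A t + coefH B t.
Proof. by rewrite /coefH /addH big_cat. Qed.

Lemma coefH_scale c A t : coefH (scaleH c A) t = c * coefH A t.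
Proof.
elim: A => [|p A IH]; first by rewrite /coefH !big_nil mulr0.
rewrite /coefH /scaleH map_cons !big_cons -/(scaleH c A) -!/(coefH _ _) IH /=.
by case: (p.2 == t); rewrite ?mulrDr.
Qed.

Lemma shX1 (a b : int * xword) B :
  shX [:: a] (b :: B) = [seq (a.1 * b.1, w) | w <- shuffle a.2 b.2] ++ shX [:: a] B.
Proof. by rewrite /shX /= !cats0. Qed.

Lemma tsh_zsum (S : seq zword) :
  tsh (zsum [:: [:: 1%N]]) (zsum S) =
  zsum (flatten [seq map rho (shuffle [:: true] (rho_inv s)) | s <- S]).
Proof.
rewrite /tsh (_ : rhoinvH (zsum [:: [:: 1%N]]) = [:: (1, [:: true])]) //.
elim: S => [|s S IH] //.
have E1 : rhoinvH (zsum (s :: S)) = (1, rho_inv s) :: rhoinvH (zsum S) by [].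
have E2 : forall A B, rhoX (A ++ B) = rhoX A ++ rhoX B by move=> A B; exact: map_cat.
have E3 : forall A B, zsum (A ++ B) = zsum A ++ zsum B by move=> A B; exact: map_cat.
rewrite E1 shX1 E2 IH map_cons (_ : forall (T:Type) (x : seq T) l, flatten (x :: l) = x ++ flatten l) // E3; congr (_ ++ _).
by rewrite /rhoX /zsum -!map_comp; apply: eq_map => w /=; rewrite mulr1.
Qed.

Lemma coef_lhs (S : seq zword) t : uniq S -> all pos S -> pos t ->
  coefH (tsh (zsum [:: [:: 1%N]]) (zsum S)) t = (count (mem S) (pre t))%:Z.
Proof.
move=> hu hS ht; rewrite tsh_zsum coefH_zsum count_flatten -map_comp.
rewrite -sum_count_mem //; congr (Posz (sumn _)).
apply/eq_in_map => s hs /=.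
by rewrite sh_ins ?count_ins_pre // (allP hS).
Qed.

Lemma count_filter1 (p : pred zword) k n t :
  count (pred1 t) [seq u <- comps k n | p u] = p t && (t \in comps k n).
Proof. by rewrite count_uniq_mem ?filter_uniq ?uniq_comps // mem_filter. Qed.

Lemma pos_last a r : pos (a :: r) -> (0 < last a r)%N.
Proof. by move=> h; apply: (allP h); apply: mem_last. Qed.

Lemma all_pos_comps k n : all pos (comps k n).
Proof. by apply/allP => u; rewrite mem_comps => /and3P []. Qed.

Theorem lemma4p2 (k n : nat) (hk : (2 <= k)%N) (hn : (k <= n)%N) :
  eqH (tsh (zsum [:: [:: 1%N]])
           (zsum [seq s <- comps k.-1 n.-1 | (2 <= head 0%N s)%N]))
      (addH (zsum [seq t <- comps k n | (head 0%N t == 1%N) && (2 <= nth 0%N t 1)%N])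
      (addH (scaleH k%:Z
               (zsum [seq t <- comps k n | (2 <= head 0%N t)%N && (last 0%N t == 1%N)]))
            (scaleH (k.-1)%:Z
               (zsum [seq t <- comps k n | (2 <= head 0%N t)%N && (2 <= last 0%N t)%N]))))
  /\
  eqH (tsh (zsum [:: [:: 1%N]]) (zsum (comps k.-1 n.-1)))
      (addH (scaleH k%:Z (zsum [seq t <- comps k n | last 0%N t == 1%N]))
            (scaleH (k.-1)%:Z (zsum [seq t <- comps k n | (2 <= last 0%N t)%N]))).
Proof.
set S := comps k.-1 n.-1.
have hSu : uniq S := uniq_comps _ _.
have hSp : all pos S := all_pos_comps _ _.
have key : forall t u, pos t -> u \in pre t -> (u \in S) = (t \in comps k n).
  move=> t u ht hu; have [h1 h2 h3 h4] := @pre_prop t u ht hu.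
  rewrite !mem_comps h1 h2 h3 ht /=.
  have : (0 < sumn t)%N.
    case: t ht h4 {h1 h2 hu} => [|a r] //= /andP [ha _] _; lia.
  move=> hs; apply/idP/idP => /andP [/eqP e1 /eqP e2]; apply/andP; split; apply/eqP; lia.
split => t ht.
- rewrite coef_lhs ?filter_uniq //; last by apply/allP => u; rewrite mem_filter => /andP [_ /(allP hSp)].
  rewrite !coefH_add !coefH_scale !coefH_zsum !count_filter1 -!PoszM -!PoszD; congr Posz.
  have [tin|tout] := boolP (t \in comps k n); last first.
    rewrite !andbF !muln0 /=.
    rewrite (eq_in_count (a2 := pred0)) ?count_pred0 // => u hu /=.
    by rewrite mem_filter (key t u ht hu) (negbTE tout) andbF.
  rewrite !andbT.
  have := tin; rewrite mem_comps => /and3P [/eqP hsz _ _].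
  have hkin : forall u, u \in pre t -> u \in S by move=> u hu; rewrite (key t u ht hu).
  have : (1 < size t)%N by rewrite hsz.
  case: t ht tin hsz hkin => [|a [|b r]] // ht tin hsz hkin _.
  rewrite pre_cons2 count_cons count_map /= mem_filter hkin ?pre_cons2 ?mem_head // andbT.
  rewrite (eq_in_count (a2 := fun _ => (1 < a)%N)); last first.
    move=> u hu /=; rewrite mem_filter hkin ?andbT // pre_cons2 in_cons.
    by rewrite (map_f (cons a) hu) orbT.
  have hl := @pos_last a (b :: r) ht.
  move: ht => /andP [ha /andP [hb _]].
  by rewrite count_const size_pre -hsz /= arith.
- rewrite coef_lhs //.
  rewrite !coefH_add !coefH_scale !coefH_zsum !count_filter1 -!PoszM -!PoszD; congr Posz.
  have [tin|tout] := boolP (t \in comps k n); last first.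
    rewrite !andbF !muln0 /=.
    rewrite (eq_in_count (a2 := pred0)) ?count_pred0 // => u hu /=.
    by rewrite (key t u ht hu) (negbTE tout).
  rewrite !andbT.
  have := tin; rewrite mem_comps => /and3P [/eqP hsz _ _].
  rewrite (eq_in_count (a2 := predT)) ?count_predT; last by move=> u hu; rewrite /= (key t u ht hu).
  have : (1 < size t)%N by rewrite hsz.
  case: t ht tin hsz => [|a r] // ht tin hsz _.
  have hl := @pos_last a r ht.
  by rewrite size_pre -hsz /= arith2.
Qed.
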